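(* Let $k\geq0$, $q\geq1$, $m\ge1$ and $\gamma=(\gamma_1,\ldots,\gamma_m)\in\mathbb{Z}^m$ with $\gamma_1\ge 2$ and $2\le\gamma_{i+1}\le\gamma_i+1$ for all $1\le i<m$. Then \[F^{2143}(k,q,\gamma)=\begin{cases} s^k & m=1,\\ F^{2143}(0,q{-}1,\gamma)+F^{2143}(\gamma_1{+}1{-}\gamma_2,q,\gamma') & m\geq2,\ k=0,\\ sF^{2143}(k{-}1,q,\gamma)+sF^{2143}(\gamma_1{+}1{-}\gamma_2{+}k,q,\gamma')-sF^{2143}(\gamma_1{-}\gamma_2{+}k,q,\gamma') & m\geq2,\ k\geq1. \end{cases}\]
   Context: Define $\mathrm{suc}^{2143}$ on integer triples by $\mathrm{suc}^{2143}(x,y,z)=\emptyset$ if $z\le 0$ and, for $z\ge1$, $\mathrm{suc}^{2143}(x,y,z)=\{(2,y{+}1,z),\ldots,(x{+}1,y{+}1,z)\}\cup\{(x,x{+}1,z),\ldots,(x,y,z)\}\cup\mathrm{suc}^{2143}(x,x,z{-}1)$ (second set empty if $y\le x$). A path in $\mathcal{P}^{2143}$ is a finite sequence $P=(v_1,\ldots,v_r)$, $r\ge1$, of points of $\mathbb{Z}^3$ with $v_1=(x,y,z)$ satisfying $2\le x\le y$, $z\ge1$, and $v_{i+1}\in\mathrm{suc}^{2143}(v_i)$ for all $i$; its length is $\ell(P)=r$. An edge $v_i\to v_{i+1}$ from $(x_1,y_1,z_1)$ to $(x_2,y_2,z_2)$ is recorded if either $z_1=z_2$ and $y_2=y_1+1$,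 or $z_1>z_2$. The signature $\mathrm{sig}(P)$ is the tuple consisting of the $x$-coordinate of $v_1$ followed by the $x$-coordinates of the endpoints of the recorded edges, in order. For $k\ge0$, $q\ge1$, $\gamma\in\mathbb{Z}^m$, $m\ge1$, let $\mathcal{P}^{2143}_{k,q,\gamma}$ be the set of paths in $\mathcal{P}^{2143}$ starting at $(\gamma_1,\gamma_1+k,q)$ with signature $\gamma$, and $F^{2143}(k,q,\gamma)=\sum_{P\in\mathcal{P}^{2143}_{k,q,\gamma}}t^{\ell(P)-m}$, a formal power series in $t$. By convention $F^{2143}(k,q,\gamma)=0$ if $q\le0$ or $\gamma$ is the empty tuple. Write $s=1/(1-t)=1+t+t^2+\cdots$ and $\gamma'=(\gamma_2,\ldots,\gamma_m)$ (empty if $m=1$). *)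

(* Defs.v *)
From Stdlib Require Import ZArith List.
Import ListNotations.
Open Scope Z_scope.
Open Scope bool_scope.

Definition pt := (Z * Z * Z)%type.
Definition px (v : pt) : Z := fst (fst v).
Definition py (v : pt) : Z := snd (fst v).
Definition pz (v : pt) : Z := snd v.

Definition zrange (lo hi : Z) : list Z :=
  map (fun i => lo + Z.of_nat i) (seq 0 (Z.to_nat (hi - lo + 1))).

Fixpoint suc_aux (fuel : nat) (x y z : Z) : list pt :=
  if z <=? 0 then []
  else map (fun a => (a, y + 1, z)) (zrange 2 (x + 1))
       ++ map (fun b => (x, b, z)) (zrange (x + 1) y)
       ++ match fuel with
          | O => []
          | S f => suc_aux f x x (z - 1)
          end.

Definition suc2143 (v : pt) : list pt :=
  suc_aux (Z.to_nat (pz v)) (px v) (py v) (pz v).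

Definition pt_eqb (v w : pt) : bool :=
  (px v =? px w) && (py v =? py w) && (pz v =? pz w).

Definition in_suc (w v : pt) : bool := existsb (pt_eqb w) (suc2143 v).

Fixpoint succ_chain (l : list pt) : bool :=
  match l with
  | v :: ((w :: _) as rest) => in_suc w v && succ_chain rest
  | _ => true
  end.

Definition is_path2143 (l : list pt) : bool :=
  match l with
  | [] => false
  | v :: _ => (2 <=? px v) && (px v <=? py v) && (1 <=? pz v) && succ_chain l
  end.

(* all sequences of length r starting at v whose consecutive entries are
   successors; every path of length r starting at v appears here
   (possibly with repetitions, which is why we dedupe below) *)
Fixpoint chains_from (r : nat) (v : pt) : list (list pt) :=
  match r with
  | O => []
  | S O => [[v]]
  | S r' => map (cons v) (flat_map (chains_from r') (suc2143 v))
  end.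

Definition recorded (v w : pt) : bool :=
  ((pz v =? pz w) && (py w =? py v + 1)) || (pz w <? pz v).

Fixpoint rec_xs (l : list pt) : list Z :=
  match l with
  | v :: ((w :: _) as rest) =>
      (if recorded v w then [px w] else []) ++ rec_xs rest
  | _ => []
  end.

Definition sig2143 (l : list pt) : list Z :=
  match l with
  | [] => []
  | v :: _ => px v :: rec_xs l
  end.

Definition pt_eq_dec (v w : pt) : {v = w} + {v <> w}.
Proof. decide equality; try apply Z.eq_dec; decide equality; apply Z.eq_dec. Defined.

Definition list_pt_dec := list_eq_dec pt_eq_dec.

Definition paths_len (k q : Z) (gamma : list Z) (r : nat) : list (list pt) :=
  nodup list_pt_dec
    (filter (fun l => is_path2143 l &&
                     if list_eq_dec Z.eq_dec (sig2143 l) gamma then true else false)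
       (chains_from r (hd 0 gamma, hd 0 gamma + k, q))).

Definition pser := nat -> Z.

(* F^{2143}(k,q,gamma) : coefficient of t^n = #{P : l(P) - m = n} *)
Definition F2143 (k q : Z) (gamma : list Z) : pser := fun n =>
  match gamma with
  | [] => 0
  | _ => if q <=? 0 then 0
         else Z.of_nat (length (paths_len k q gamma (n + length gamma)%nat))
  end.

Definition ps_add (f g : pser) : pser := fun n => f n + g n.
Definition ps_sub (f g : pser) : pser := fun n => f n - g n.
Definition ps_one : pser := fun n => if Nat.eqb n 0 then 1 else 0.
Definition ps_mul (f g : pser) : pser := fun n =>
  fold_right Z.add 0 (map (fun i => f i * g (n - i)%nat) (seq 0 (S n))).
(* s = 1/(1-t) = 1 + t + t^2 + ... *)
Definition ps_s : pser := fun _ => 1.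
Definition ps_pow (f : pser) (k : nat) : pser := Nat.iter k (ps_mul f) ps_one.

(* Main.v *)
Require Import Defs.
From Stdlib Require Import ZArith List.
Import ListNotations.
Open Scope Z_scope.
From Stdlib Require Import Lia FinFun FunctionalExtensionality.

Ltac bz := repeat match goal with
  | H : (_ <=? _) = true |- _ => apply Z.leb_le in H
  | H : (_ <=? _) = false |- _ => apply Z.leb_gt in H
  | H : (_ <? _) = true |- _ => apply Z.ltb_lt in H
  | H : (_ <? _) = false |- _ => apply Z.ltb_ge in H
  | H : (_ =? _) = true |- _ => apply Z.eqb_eq in H
  | H : (_ =? _) = false |- _ => apply Z.eqb_neq in H
  end.

Definition sumZ (l : list Z) : Z := fold_right Z.add 0 l.

Lemma sumZ_app l1 l2 : sumZ (l1 ++ l2) = sumZ l1 + sumZ l2.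
Proof. induction l1; simpl; [lia|]. rewrite IHl1; lia. Qed.

Lemma sumZ_zero {A} (f : A -> Z) l : (forall x, In x l -> f x = 0) -> sumZ (map f l) = 0.
Proof. induction l; simpl; auto. intros H. rewrite H by auto. rewrite IHl; auto. Qed.

Fixpoint cnt (r : nat) (v : pt) (g : list Z) {struct r} : Z :=
  match r with
  | O => 0
  | S r' => match r' with
     | O => match g with [] => 1 | _ => 0 end
     | S _ => sumZ (map (fun w => if recorded v w then
                 match g with [] => 0 | a :: g' => if Z.eqb a (px w) then cnt r' w g' else 0 end
               else cnt r' w g) (suc2143 v))
     end
  end.

Definition term (v : pt) (g : list Z) (r : nat) (w : pt) : Z :=
  if recorded v w then
    match g with [] => 0 | a :: g' => if Z.eqb a (px w) then cnt (S r) w g' else 0 end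
  else cnt (S r) w g.

Lemma cnt_SS r v g : cnt (S (S r)) v g = sumZ (map (term v g r) (suc2143 v)).
Proof. reflexivity. Qed.

Lemma zrange_In b lo hi : In b (zrange lo hi) -> lo <= b <= hi.
Proof.
  unfold zrange. rewrite in_map_iff. intros [i [<- Hi]]. apply in_seq in Hi. lia.
Qed.

Lemma zrange_snoc lo hi : lo <= hi + 1 -> zrange lo (hi + 1) = zrange lo hi ++ [hi + 1].
Proof.
  intros H. unfold zrange.
  replace (hi + 1 - lo + 1) with (Z.succ (hi - lo + 1)) by lia.
  rewrite Z2Nat.inj_succ by lia.
  rewrite seq_S, map_app. simpl. f_equal. f_equal. rewrite Z2Nat.id by lia. lia.
Qed.

Lemma zrange_empty lo hi : hi < lo -> zrange lo hi = [].
Proof. intros. unfold zrange. replace (Z.to_nat (hi - lo + 1)) with 0%nat by lia. reflexivity. Qed.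

Lemma zrange_NoDup lo hi : NoDup (zrange lo hi).
Proof.
  unfold zrange. apply Injective_map_NoDup; [|apply seq_NoDup].
  intros a b H. lia.
Qed.

Lemma sum_indicator (h : Z -> Z) a0 lo hi :
  sumZ (map (fun a => if Z.eqb a0 a then h a else 0) (zrange lo hi)) =
  if (lo <=? a0) && (a0 <=? hi) then h a0 else 0.
Proof.
  unfold zrange. rewrite map_map.
  assert (G : forall N s, sumZ (map (fun i => if Z.eqb a0 (lo + Z.of_nat i) then h (lo + Z.of_nat i) else 0) (seq s N))
     = if (lo + Z.of_nat s <=? a0) && (a0 <? lo + Z.of_nat s + Z.of_nat N) then h a0 else 0).
  { induction N; intros s; simpl.
    - destruct (_ <=? _) eqn:E0, (_ <? _) eqn:E; simpl; auto; bz; lia.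
    - rewrite IHN. rewrite !Nat2Z.inj_succ.
      repeat match goal with
      | |- context [?a <=? ?b] => destruct (Z.leb_spec a b)
      | |- context [?a <? ?b] => destruct (Z.ltb_spec a b)
      | |- context [?a =? ?b] => destruct (Z.eqb_spec a b)
      end; simpl; subst; try lia. }
  rewrite G. simpl.
  destruct (lo + 0 <=? a0) eqn:E1, (lo <=? a0) eqn:E2, (a0 <? lo + 0 + Z.of_nat (Z.to_nat (hi - lo + 1))) eqn:E3,
     (a0 <=? hi) eqn:E4; simpl; auto; bz; lia.
Qed.


Lemma suc_aux_nonpos f x y z : z <= 0 -> suc_aux f x y z = [].
Proof. intros H. destruct f; simpl; destruct (Z.leb_spec z 0); auto; lia. Qed.

Lemma suc_unfold x y z : 1 <= z ->
  suc2143 (x, y, z) = map (fun a => (a, y + 1, z)) (zrange 2 (x + 1))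
       ++ map (fun b => (x, b, z)) (zrange (x + 1) y) ++ suc2143 (x, x, z - 1).
Proof.
  intros H. unfold suc2143. cbn [px py pz fst snd].
  replace z with (Z.succ (z - 1)) at 1 by lia.
  rewrite Z2Nat.inj_succ by lia. simpl.
  destruct (Z.leb_spec z 0); [lia|]. replace (Z.succ (z-1)) with z by lia. reflexivity.
Qed.

Lemma suc_aux_mem f x y z w : In w (suc_aux f x y z) ->
  (pz w = z /\ py w = y + 1) \/ (pz w = z /\ px w = x /\ x + 1 <= py w <= y) \/ pz w < z.
Proof.
  revert y z. induction f; intros y z; simpl; destruct (Z.leb_spec z 0); simpl; try tauto;
  rewrite !in_app_iff, !in_map_iff.
  - intros [[a [<- _]]|[[b [<- Hb]]|[]]]; cbn; [left; auto|]. apply zrange_In in Hb. right; left; lia.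
  - intros [[a [<- _]]|[[b [<- Hb]]|Hw]]; cbn; [left; auto| |].
    + apply zrange_In in Hb. right; left; lia.
    + apply IHf in Hw. right; right; lia.
Qed.

Lemma suc_mem x y z w : In w (suc2143 (x,y,z)) ->
  (pz w = z /\ py w = y + 1) \/ (pz w = z /\ px w = x /\ x + 1 <= py w <= y) \/ pz w < z.
Proof. apply suc_aux_mem. Qed.

Lemma suc_aux_NoDup f x y z : NoDup (suc_aux f x y z).
Proof.
  revert y z. induction f; intros y z; simpl; destruct (Z.leb_spec z 0); try constructor;
  (apply NoDup_app; [ apply Injective_map_NoDup; [intros a b Hab; congruence | apply zrange_NoDup] | | ]).
  - rewrite app_nil_r. apply Injective_map_NoDup; [intros a b Hab; congruence | apply zrange_NoDup].
  - intros w Hw1 Hw2. rewrite app_nil_r in Hw2. apply in_map_iff in Hw1, Hw2.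
    destruct Hw1 as [a [<- _]]. destruct Hw2 as [b [Heq Hb]]. apply zrange_In in Hb. inversion Heq; lia.
  - apply NoDup_app; [apply Injective_map_NoDup; [intros a b Hab; congruence | apply zrange_NoDup] | apply IHf |].
    intros w Hw1 Hw2. apply in_map_iff in Hw1. destruct Hw1 as [b [<- _]].
    apply suc_aux_mem in Hw2. cbn in Hw2. lia.
  - intros w Hw1 Hw2. apply in_map_iff in Hw1. destruct Hw1 as [a [<- _]].
    apply in_app_iff in Hw2. destruct Hw2 as [Hw2|Hw2].
    + apply in_map_iff in Hw2. destruct Hw2 as [b [Heq Hb]]. apply zrange_In in Hb. inversion Heq; lia.
    + apply suc_aux_mem in Hw2. cbn in Hw2. lia.
Qed.

Lemma suc_NoDup v : NoDup (suc2143 v).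
Proof. apply suc_aux_NoDup. Qed.


Lemma chains_head r v l : In l (chains_from r v) -> exists rest, l = v :: rest /\ succ_chain l = true.
Proof.
  revert v l. induction r as [|r IH]; intros v l; [simpl; tauto|].
  destruct r as [|r].
  - simpl. intros [<-|[]]. exists []. auto.
  - change (chains_from (S (S r)) v) with (map (cons v) (flat_map (chains_from (S r)) (suc2143 v))).
    rewrite in_map_iff. intros [l' [<- Hl']]. apply in_flat_map in Hl'. destruct Hl' as [w [Hw Hl']].
    destruct (IH _ _ Hl') as [rest [-> Hs]]. exists (w :: rest). split; auto.
    change (in_suc w v && succ_chain (w :: rest) = true). rewrite Hs, Bool.andb_true_r.
    unfold in_suc. apply existsb_exists. exists w. split; auto.
    unfold pt_eqb. rewrite !Z.eqb_refl. reflexivity.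
Qed.

Lemma NoDup_flat_map {A B} (f : A -> list B) (l : list A) :
  NoDup l -> (forall x, NoDup (f x)) ->
  (forall x y b, In b (f x) -> In b (f y) -> x = y) -> NoDup (flat_map f l).
Proof.
  induction l; intros Hl Hf Hd; simpl; [constructor|].
  inversion Hl; subst. apply NoDup_app; auto.
  intros b K1 K2. apply in_flat_map in K2. destruct K2 as [y [Hy K2]].
  match goal with H : ~ In _ _ |- _ => apply H end. rewrite (Hd _ _ _ K1 K2). exact Hy.
Qed.

Lemma chains_NoDup r v : NoDup (chains_from r v).
Proof.
  revert v. induction r as [|r IH]; intros v; [constructor|].
  destruct r as [|r].
  - simpl. repeat constructor; auto.
  - change (chains_from (S (S r)) v) with (map (cons v) (flat_map (chains_from (S r)) (suc2143 v))).
    apply Injective_map_NoDup; [intros a b H; congruence|].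
    apply NoDup_flat_map; auto using suc_NoDup.
    intros x y b H1 H2. apply chains_head in H1, H2.
    destruct H1 as [r1 [-> _]]. destruct H2 as [r2 [H _]]. congruence.
Qed.

Definition Pg (g : list Z) (l : list pt) : bool :=
  if list_eq_dec Z.eq_dec (rec_xs l) g then true else false.

Lemma len_filter_map {A B} (P : B -> bool) (f : A -> B) l :
  length (filter P (map f l)) = length (filter (fun x => P (f x)) l).
Proof. induction l; simpl; auto. destruct (P (f a)); simpl; auto. Qed.

Lemma len_filter_flat_map {A B} (P : B -> bool) (f : A -> list B) l :
  Z.of_nat (length (filter P (flat_map f l))) = sumZ (map (fun x => Z.of_nat (length (filter P (f x)))) l).
Proof.
  induction l; simpl; auto. rewrite filter_app, length_app, Nat2Z.inj_add, IHl. reflexivity.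
Qed.

Lemma len_filter_false {A} (P : A -> bool) l : (forall x, In x l -> P x = false) -> length (filter P l) = 0%nat.
Proof. induction l; simpl; auto. intros H. rewrite H by auto. auto. Qed.

Lemma count_cnt r v g : Z.of_nat (length (filter (Pg g) (chains_from r v))) = cnt r v g.
Proof.
  revert v g. induction r as [|r IH]; intros v g; [reflexivity|].
  destruct r as [|r].
  - simpl. unfold Pg. simpl. destruct (list_eq_dec Z.eq_dec [] g) as [<-|Hg]; simpl; auto.
    destruct g; [congruence|reflexivity].
  - change (chains_from (S (S r)) v) with (map (cons v) (flat_map (chains_from (S r)) (suc2143 v))).
    rewrite len_filter_map, len_filter_flat_map, cnt_SS. f_equal. apply map_ext_in. intros w Hw.
    unfold term. rewrite <- IH.
    assert (E : forall l, In l (chains_from (S r) w) -> Pg g (v :: l) =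
      if recorded v w then (match g with [] => false | a :: g' => if Z.eqb a (px w) then Pg g' l else false end)
      else Pg g l).
    { intros l Hl. destruct (chains_head _ _ _ Hl) as [rest [-> _]].
      unfold Pg. change (rec_xs (v :: w :: rest)) with ((if recorded v w then [px w] else []) ++ rec_xs (w :: rest)).
      destruct (recorded v w); cbn [app]; auto.
      destruct g as [|a g']; [destruct (list_eq_dec Z.eq_dec (px w :: rec_xs (w :: rest)) []); congruence|].
      destruct (Z.eqb_spec a (px w)).
      - subst. destruct (list_eq_dec Z.eq_dec (px w :: rec_xs (w :: rest)) (px w :: g')),
          (list_eq_dec Z.eq_dec (rec_xs (w :: rest)) g'); congruence.
      - destruct (list_eq_dec Z.eq_dec (px w :: rec_xs (w :: rest)) (a :: g')); congruence. }
    rewrite (filter_ext_in _ _ _ E).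
    destruct (recorded v w); [|reflexivity].
    destruct g as [|a g'].
    + rewrite len_filter_false; auto.
    + destruct (Z.eqb a (px w)); [rewrite <- IH; reflexivity|]. rewrite len_filter_false; auto.
Qed.

Lemma F_cnt k q a g n : 1 <= q -> 0 <= k -> 2 <= a ->
  F2143 k q (a :: g) n = cnt (n + S (length g)) (a, a + k, q) g.
Proof.
  intros Hq Hk Ha. unfold F2143. destruct (Z.leb_spec q 0); [lia|].
  unfold paths_len. rewrite nodup_fixed_point by (apply NoDup_filter, chains_NoDup).
  simpl hd. change (length (a :: g)) with (S (length g)).
  rewrite <- count_cnt. f_equal. f_equal. apply filter_ext_in. intros l Hl.
  destruct (chains_head _ _ _ Hl) as [rest [-> Hs]].
  unfold is_path2143. rewrite Hs. cbn [px py pz fst snd].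
  destruct (Z.leb_spec 2 a); [|lia]. destruct (Z.leb_spec a (a + k)); [|lia]. destruct (Z.leb_spec 1 q); [|lia].
  cbn [andb]. unfold Pg. unfold sig2143. cbn [px fst].
  repeat match goal with |- context [list_eq_dec ?d ?x ?y] => destruct (list_eq_dec d x y) end;
  congruence.
Qed.


Lemma cnt_small r v g : (r <= length g)%nat -> cnt r v g = 0.
Proof.
  revert v g. induction r as [|r IH]; intros v g H; [reflexivity|].
  destruct r as [|r].
  - destruct g; simpl in *; [lia|reflexivity].
  - rewrite cnt_SS. apply sumZ_zero. intros w _. unfold term.
    destruct (recorded v w).
    + destruct g as [|a g']; auto. destruct (a =? px w); auto. apply IH. simpl in H. lia.
    + apply IH. lia.
Qed.

Lemma rec_all x z w : In w (suc2143 (x, x, z)) -> recorded (x, x, z) w = true.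
Proof.
  intros Hw. apply suc_mem in Hw.
  unfold recorded. cbn [px py pz fst snd]. destruct Hw as [[H1 H2]|[[H1 H2]|H1]].
  - rewrite H1, H2, !Z.eqb_refl. reflexivity.
  - lia.
  - destruct (Z.ltb_spec (pz w) z); [apply Bool.orb_true_r|lia].
Qed.

Definition M1 (x y z : Z) (g : list Z) (r : nat) : Z :=
  match g with [] => 0 | a0 :: g' =>
    if (2 <=? a0) && (a0 <=? x + 1) then cnt (S r) (a0, y + 1, z) g' else 0 end.

Lemma expand r x y z g : 1 <= z ->
  cnt (S (S r)) (x, y, z) g = M1 x y z g r + sumZ (map (fun b => cnt (S r) (x, b, z) g) (zrange (x + 1) y))
    + cnt (S (S r)) (x, x, z - 1) g.
Proof.
  intros Hz. rewrite !cnt_SS, suc_unfold by lia. rewrite !map_app, !sumZ_app, !map_map, Z.add_assoc.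
  f_equal; [f_equal|].
  - unfold M1. destruct g as [|a0 g'].
    + apply sumZ_zero. intros a _. unfold term, recorded. cbn [px py pz fst snd]. rewrite !Z.eqb_refl. reflexivity.
    + rewrite <- (sum_indicator (fun a => cnt (S r) (a, y + 1, z) g')). f_equal. apply map_ext. intros a.
      unfold term, recorded. cbn [px py pz fst snd]. rewrite !Z.eqb_refl. reflexivity.
  - f_equal. apply map_ext_in. intros b Hb. apply zrange_In in Hb. unfold term, recorded.
    cbn [px py pz fst snd]. destruct (Z.eqb_spec b (y + 1)); [lia|]. destruct (Z.ltb_spec z z); [lia|].
    rewrite Bool.andb_false_r. reflexivity.
  - f_equal. apply map_ext_in. intros w Hw. unfold term. rewrite (rec_all _ _ _ Hw).
    apply suc_mem in Hw.
    assert (R1 : recorded (x, y, z) w = true).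
    { unfold recorded. cbn [px py pz fst snd]. destruct (Z.ltb_spec (pz w) z); [apply Bool.orb_true_r|].
      exfalso. destruct Hw as [[H1 H2]|[[H1 H2]|H1]]; lia. }
    rewrite R1. reflexivity.
Qed.

Lemma cnt_nonpos r x z g : z <= 0 -> cnt (S (S r)) (x, x, z) g = 0.
Proof. intros H. rewrite cnt_SS. unfold suc2143. cbn [px py pz fst snd]. rewrite suc_aux_nonpos by lia. reflexivity. Qed.

Lemma cnt_down_nil r x z : cnt (S (S r)) (x, x, z) [] = 0.
Proof.
  rewrite cnt_SS. apply sumZ_zero. intros w Hw. unfold term. rewrite rec_all; auto.
Qed.


Lemma ps_s_mul_0 f : ps_mul ps_s f 0%nat = f 0%nat.
Proof. unfold ps_mul, ps_s. simpl. destruct (f 0%nat); reflexivity. Qed.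

Lemma ps_s_mul_S f n : ps_mul ps_s f (S n) = ps_mul ps_s f n + f (S n).
Proof.
  unfold ps_mul, ps_s. change (seq 0 (S (S n))) with (0%nat :: seq 1 (S n)).
  cbn [map fold_right]. rewrite <- seq_shift, map_map. simpl (S n - 0)%nat.
  assert (E : map (fun x : nat => 1 * f (S n - S x)%nat) (seq 0 (S n)) = map (fun i => 1 * f (n - i)%nat) (seq 0 (S n))).
  { apply map_ext. intros; reflexivity. }
  rewrite E. lia.
Qed.

Lemma step r x y z g : 1 <= z -> x + 1 <= y ->
  cnt (S (S r)) (x, y, z) g = cnt (S (S r)) (x, y - 1, z) g + M1 x y z g r - M1 x (y - 1) z g r
    + cnt (S r) (x, y, z) g.
Proof.
  intros Hz Hy. rewrite (expand r x y z), (expand r x (y - 1) z) by lia.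
  replace y with ((y - 1) + 1) at 2 by lia.
  rewrite zrange_snoc by lia. rewrite map_app, sumZ_app. simpl.
  replace (y - 1 + 1) with y by lia. lia.
Qed.

Lemma step0 r x z g : 1 <= z ->
  cnt (S (S r)) (x, x, z) g = M1 x x z g r + cnt (S (S r)) (x, x, z - 1) g.
Proof.
  intros Hz. rewrite expand by lia. rewrite zrange_empty by lia. simpl. lia.
Qed.

Lemma case1 K x q n : 2 <= x -> 1 <= q ->
  cnt (n + 1) (x, x + Z.of_nat K, q) [] = ps_pow ps_s K n.
Proof.
  intros Hx Hq. revert n. induction K as [|K IH]; intros n.
  - destruct n as [|n]; [reflexivity|].
    replace (S n + 1)%nat with (S (S n)) by lia. rewrite Z.add_0_r, step0 by lia.
    rewrite cnt_down_nil. reflexivity.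
  - change (ps_pow ps_s (S K)) with (ps_mul ps_s (ps_pow ps_s K)).
    induction n as [|n IHn].
    + rewrite ps_s_mul_0, <- IH. reflexivity.
    + rewrite ps_s_mul_S, <- IH, <- IHn.
      replace (S n + 1)%nat with (S (S n)) by lia. rewrite step by lia.
      replace (x + Z.of_nat (S K) - 1) with (x + Z.of_nat K) by lia.
      simpl M1. rewrite Nat.add_1_r. lia.
Qed.


Theorem lemma3p4 (k q : Z) (gamma : list Z) :
  0 <= k -> 1 <= q -> (1 <= length gamma)%nat ->
  2 <= hd 0 gamma ->
  (forall i : nat, (S i < length gamma)%nat ->
     2 <= nth (S i) gamma 0 <= nth i gamma 0 + 1) ->
  (length gamma = 1%nat -> F2143 k q gamma = ps_pow ps_s (Z.to_nat k)) /\
  ((2 <= length gamma)%nat -> k = 0 ->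
     F2143 k q gamma =
       ps_add (F2143 0 (q - 1) gamma)
              (F2143 (hd 0 gamma + 1 - nth 1 gamma 0) q (tl gamma))) /\
  ((2 <= length gamma)%nat -> 1 <= k ->
     F2143 k q gamma =
       ps_sub (ps_add (ps_mul ps_s (F2143 (k - 1) q gamma))
                      (ps_mul ps_s (F2143 (hd 0 gamma + 1 - nth 1 gamma 0 + k) q (tl gamma))))
              (ps_mul ps_s (F2143 (hd 0 gamma - nth 1 gamma 0 + k) q (tl gamma)))).
Proof.
  intros Hk Hq Hlen Hhd Hnth.
  destruct gamma as [|x g]; [simpl in Hlen; lia|]. simpl in Hhd.
  split; [|split].
  - intros Hl. destruct g; [|simpl in Hl; discriminate].
    apply functional_extensionality; intros n.
    rewrite F_cnt by lia. simpl length.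
    replace (x + k) with (x + Z.of_nat (Z.to_nat k)) by (rewrite Z2Nat.id; lia).
    apply case1; lia.
  - intros Hl Hk0. subst k. destruct g as [|a0 g']; [simpl in Hl; lia|].
    assert (Ha0 := Hnth 0%nat ltac:(simpl; lia)). simpl in Ha0. cbn [hd tl nth].
    apply functional_extensionality; intros n. unfold ps_add.
    rewrite (F_cnt 0 q x (a0 :: g') n) by lia. rewrite (F_cnt (x + 1 - a0) q a0 g' n) by lia.
    replace (n + S (length (a0 :: g')))%nat with (S (S (n + length g'))) by (simpl; lia).
    rewrite Z.add_0_r, step0 by lia. unfold M1.
    destruct (Z.leb_spec 2 a0); [|lia]. destruct (Z.leb_spec a0 (x + 1)); [|lia]. cbn [andb].
    replace (a0 + (x + 1 - a0)) with (x + 1) by lia.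
    replace (n + S (length g'))%nat with (S (n + length g')) by lia.
    destruct (Z.leb_spec (q - 1) 0).
    + unfold F2143 at 1. destruct (Z.leb_spec (q - 1) 0); [|lia]. rewrite cnt_nonpos by lia. lia.
    + rewrite (F_cnt 0 (q - 1) x (a0 :: g') n) by lia. rewrite Z.add_0_r.
      replace (n + S (length (a0 :: g')))%nat with (S (S (n + length g'))) by (simpl; lia). lia.
  - intros Hl Hk1. destruct g as [|a0 g']; [simpl in Hl; lia|].
    assert (Ha0 := Hnth 0%nat ltac:(simpl; lia)). simpl in Ha0. cbn [hd tl nth].
    assert (KEY : forall n, F2143 k q (x :: a0 :: g') n =
      F2143 (k - 1) q (x :: a0 :: g') n + F2143 (x + 1 - a0 + k) q (a0 :: g') n
      - F2143 (x - a0 + k) q (a0 :: g') n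
      + match n with O => 0 | S n' => F2143 k q (x :: a0 :: g') n' end).
    { intros n.
      rewrite (F_cnt k q x (a0 :: g') n), (F_cnt (k - 1) q x (a0 :: g') n),
        (F_cnt (x + 1 - a0 + k) q a0 g' n), (F_cnt (x - a0 + k) q a0 g' n) by lia.
      replace (n + S (length (a0 :: g')))%nat with (S (S (n + length g'))) by (simpl; lia).
      rewrite step by lia. unfold M1.
      destruct (Z.leb_spec 2 a0); [|lia]. destruct (Z.leb_spec a0 (x + 1)); [|lia]. cbn [andb].
      replace (x + k - 1) with (x + (k - 1)) by lia.
      replace (x + k + 1) with (a0 + (x + 1 - a0 + k)) by lia.
      replace (x + (k - 1) + 1) with (a0 + (x - a0 + k)) by lia.
      replace (n + S (length g'))%nat with (S (n + length g')) by lia.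
      destruct n as [|n].
      - rewrite (cnt_small (S (0 + length g')) _ (a0 :: g')) by (simpl; lia). lia.
      - rewrite (F_cnt k q x (a0 :: g') n) by lia.
        replace (n + S (length (a0 :: g')))%nat with (S (S n + length g')) by (simpl; lia). lia. }
    apply functional_extensionality; intros n. unfold ps_sub, ps_add.
    induction n as [|n IHn].
    + rewrite !ps_s_mul_0, KEY. lia.
    + rewrite !ps_s_mul_S, KEY, IHn. lia.
Qed.
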